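(* Let $\Omega=(a,b)$, let $S_h$ be a finite-dimensional subspace of $L^2(\Omega)$ and $\mathbf L_h:S_h\to S_h$ a linear operator that is self-adjoint and positive definite with respect to the $L^2(\Omega)$ inner product. Let $0<\gamma<1$, $K_\gamma>0$, $t>0$, $\sigma>0$, $\tau_1>0$, $N_1$ a positive integer and $\beta\in\mathbb R$. Set $z(p)=\sigma(ip+1)^2$ for $p\in\mathbb R$, $p_k=k\tau_1$, $z_k=z(p_k)$, $z_k'=z'(p_k)$, and for $v\in S_h$ define $$\Pi_{N_1}^{\gamma,\beta}v=\frac{t^{\beta-1}\tau_1}{2\pi i}\sum_{k=-N_1}^{N_1}z_k'e^{z_k}z_k^{\gamma-\beta}\left(z_k^{\gamma}\mathbf I+K_\gamma t^\gamma\mathbf L_h\right)^{-1}v,$$ with principal branches of the powers. If $\beta\ge\frac12$ and $\tau_1\le1$, then $$\left\|\Pi_{N_1}^{\gamma,\beta}v\right\|_{L^2(\Omega)}\lesssim\frac{t^{\beta-1}}{2\pi}e^{\sigma}\sigma^{-\beta+1}\|v\|_{L^2(\Omega)}\quad\text{for all }v\in S_h,$$ where the implicit constant is independent of $v$, $t$, $N_1$ and $\tau_1$.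
   Context: $A\lesssim B$ means $A\le CB$ for a constant $C$ not depending on the quantities indicated. *)

(* Defs.v *)
From HB Require Import structures.
From mathcomp Require Import all_boot all_order all_algebra.
From mathcomp Require Import all_classical all_reals all_analysis.
From mathcomp Require Import complex.
Set Implicit Arguments. Unset Strict Implicit. Unset Printing Implicit Defensive.
Import Order.TTheory GRing.Theory Num.Theory.
Local Open Scope ring_scope.
Local Open Scope classical_set_scope.
Local Open Scope complex_scope.

Section ComplexFun.
Variable R : realType.
Local Open Scope complex_scope.

Definition cmod (z : R[i]) : R := Num.sqrt (complex.Re z ^+ 2 + complex.Im z ^+ 2).

(** principal argument, in (-pi, pi] *)
Definition carg (z : R[i]) : R :=
  if (0 <= complex.Im z)%R then acos (complex.Re z / cmod z) else (- acos (complex.Re z / cmod z))%R.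

Definition cexp (z : R[i]) : R[i] :=
  (expR (complex.Re z) * cos (complex.Im z)) +i* (expR (complex.Re z) * sin (complex.Im z)).

(** principal power z^s = exp(s Log z) = |z|^s e^{i s arg z}, for real s *)
Definition cpow (z : R[i]) (s : R) : R[i] :=
  (powR (cmod z) s * cos (s * carg z)) +i* (powR (cmod z) s * sin (s * carg z)).

(** contour z(p) = sigma (i p + 1)^2 and its derivative z'(p) = 2 sigma i (i p + 1) *)
Definition zc (sig p : R) : R[i] := sig%:C * ('i * p%:C + 1) ^+ 2.
Definition dzc (sig p : R) : R[i] := (2 * sig)%:C * 'i * ('i * p%:C + 1).
End ComplexFun.

(** * The finite-dimensional space S_h = span (phi_0, ..., phi_{n-1}) in L^2(a,b) *)
Section L2Space.
Variables (R : realType) (a b : R) (n : nat) (phi : 'I_n -> R -> R).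

Definition ip (f g : R -> R) : R :=
  Rintegral (@lebesgue_measure R) `]a, b[ (fun x => f x * g x).

Definition vecf (c : 'cV[R]_n) : R -> R := fun x => \sum_(i < n) c i 0 * phi i x.

Definition L2norm (c : 'cV[R]_n) : R := Num.sqrt (ip (vecf c) (vecf c)).

(** L^2(a,b) norm of a complex element of (complexified) S_h:
    || u ||^2 = int_a^b |u|^2 = || Re u ||^2 + || Im u ||^2 *)
Definition L2normC (w : 'cV[R[i]]_n) : R :=
  Num.sqrt (ip (vecf (map_mx (@complex.Re R) w)) (vecf (map_mx (@complex.Re R) w))
          + ip (vecf (map_mx (@complex.Im R) w)) (vecf (map_mx (@complex.Im R) w))).

(** coordinates of Pi_{N1}^{gamma,beta} v, where v has coordinates c and
    L_h has matrix A (L_h (vecf c) = vecf (A *m c)).  The index k in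
    'I_(2 N1 + 1) stands for k - N1 in {-N1, ..., N1}. *)
Definition PiN (A : 'M[R]_n) (gam Kg t sig tau1 beta : R) (N1 : nat)
    (c : 'cV[R]_n) : 'cV[R[i]]_n :=
  let AC := map_mx (real_complex R) A in
  let cC := map_mx (real_complex R) c in
  ((((powR t (beta - 1) * tau1) / (2 * pi))%:C / 'i)%C *:
    \sum_(k < (2 * N1).+1)
      (let p := ((k%:R - N1%:R) * tau1)%R in
       let zk := zc sig p in
       (dzc sig p * cexp zk * cpow zk (gam - beta)) *:
         (invmx ((cpow zk gam)%:M + (Kg * powR t gam)%:C *: AC) *m cC)))%R.
End L2Space.

(* Main.v *)
Require Import Defs.
From HB Require Import structures.
From mathcomp Require Import all_boot all_order all_algebra.
From mathcomp Require Import all_classical all_reals all_analysis.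
From mathcomp Require Import complex.
From mathcomp Require Import ring lra.
Set Implicit Arguments. Unset Strict Implicit. Unset Printing Implicit Defensive.
Import Order.TTheory GRing.Theory Num.Theory.
Local Open Scope ring_scope.

Section Bil.
Variables (R : realType) (n : nat) (G : 'I_n -> 'I_n -> R).
Definition bfG (u v : 'cV[R]_n) := \sum_i \sum_j u i 0 * v j 0 * G i j.
Local Notation bf := bfG.

Lemma bfDl u1 u2 v : bf (u1 + u2) v = bf u1 v + bf u2 v.
Proof.
rewrite /bf -big_split; apply: eq_bigr => i _; rewrite -big_split.
apply: eq_bigr => j _; rewrite !mxE /=; ring.
Qed.
Lemma bfDr u v1 v2 : bf u (v1 + v2) = bf u v1 + bf u v2.
Proof.
rewrite /bf -big_split; apply: eq_bigr => i _; rewrite -big_split.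
by apply: eq_bigr => j _; rewrite !mxE /=; ring.
Qed.
Lemma bfZl k u v : bf (k *: u) v = k * bf u v.
Proof.
rewrite /bf mulr_sumr; apply: eq_bigr => i _; rewrite mulr_sumr.
by apply: eq_bigr => j _; rewrite !mxE /=; ring.
Qed.
Lemma bfZr k u v : bf u (k *: v) = k * bf u v.
Proof.
rewrite /bf mulr_sumr; apply: eq_bigr => i _; rewrite mulr_sumr.
by apply: eq_bigr => j _; rewrite !mxE /=; ring.
Qed.
Lemma bfNl u v : bf (- u) v = - bf u v.
Proof. by rewrite -scaleN1r bfZl mulN1r. Qed.
Lemma bfNr u v : bf u (- v) = - bf u v.
Proof. by rewrite -scaleN1r bfZr mulN1r. Qed.
Lemma bfBl u1 u2 v : bf (u1 - u2) v = bf u1 v - bf u2 v.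
Proof. by rewrite bfDl bfNl. Qed.
Lemma bfBr u v1 v2 : bf u (v1 - v2) = bf u v1 - bf u v2.
Proof. by rewrite bfDr bfNr. Qed.
Lemma bf0l v : bf 0 v = 0.
Proof. by rewrite -(scale0r 0) bfZl mul0r. Qed.

Hypothesis Gsym : forall i j, G i j = G j i.
Hypothesis bf_ge0 : forall u, 0 <= bf u u.

Lemma bfC u v : bf u v = bf v u.
Proof.
rewrite /bf exchange_big; apply: eq_bigr => i _; apply: eq_bigr => j _.
by rewrite Gsym; ring.
Qed.

Definition q2 (u v : 'cV[R]_n) := bf u u + bf v v.

Lemma q2_ge0 u v : 0 <= q2 u v.
Proof. by rewrite /q2 addr_ge0. Qed.

Lemma disc (A B C : R) : 0 <= A -> 0 <= C ->
  (forall t, 0 <= A + 2 * t * B + t ^+ 2 * C) -> B ^+ 2 <= A * C.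
Proof.
move=> hA hC h.
have [C0|Cpos] := eqVneq C 0.
  have [B0|Bn0] := eqVneq B 0; first by rewrite B0 C0; nra.
  have := h (- (A + 1) / (2 * B)).
  rewrite C0.
  have -> : A + 2 * (- (A + 1) / (2 * B)) * B + (- (A + 1) / (2 * B)) ^+ 2 * 0 = -1.
    by field; rewrite Bn0.
  lra.
have Cp : 0 < C by rewrite lt_def Cpos hC.
have := h (- B / C).
have -> : A + 2 * (- B / C) * B + (- B / C) ^+ 2 * C = A - B ^+ 2 / C.
  by field; rewrite Cpos.
rewrite subr_ge0 ler_pdivrMr // => H; lra.
Qed.

Lemma q2D u1 v1 u2 v2 : q2 (u1 + u2) (v1 + v2) =
  q2 u1 v1 + q2 u2 v2 + 2 * (bf u1 u2 + bf v1 v2).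
Proof.
rewrite /q2 !bfDl !bfDr (bfC u2 u1) (bfC v2 v1); ring.
Qed.

Lemma q2Z t u v : q2 (t *: u) (t *: v) = t ^+ 2 * q2 u v.
Proof. rewrite /q2 !bfZl !bfZr; ring. Qed.

Lemma CS u1 v1 u2 v2 : (bf u1 u2 + bf v1 v2) ^+ 2 <= q2 u1 v1 * q2 u2 v2.
Proof.
apply: disc; rewrite ?q2_ge0 // => t.
have := q2_ge0 (u1 + t *: u2) (v1 + t *: v2).
rewrite q2D q2Z /q2 !bfZr; lra.
Qed.

Lemma tri u1 v1 u2 v2 : Num.sqrt (q2 (u1 + u2) (v1 + v2)) <=
  Num.sqrt (q2 u1 v1) + Num.sqrt (q2 u2 v2).
Proof.
have h1 := q2_ge0 u1 v1; have h2 := q2_ge0 u2 v2.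
rewrite -(ger0_norm (addr_ge0 (sqrtr_ge0 (q2 u1 v1)) (sqrtr_ge0 (q2 u2 v2)))).
rewrite -ler_sqr ?nnegrE ?sqrtr_ge0 ?normr_ge0 //.
rewrite sqr_sqrtr ?q2_ge0 // real_normK ?num_real // sqrrD !sqr_sqrtr //.
rewrite q2D -sqrtrM // .
have := CS u1 v1 u2 v2.
set B := bf u1 u2 + bf v1 v2.
move=> hB.
have : B <= Num.sqrt (q2 u1 v1 * q2 u2 v2).
  apply: le_trans (ler_norm B) _; rewrite -sqrtr_sqr; exact: ler_wsqrtr.
lra.
Qed.
End Bil.

Local Open Scope classical_set_scope.
Section Form.
Variables (R : realType) (a b : R) (n : nat) (phi : 'I_n -> R -> R).
Hypothesis hmeas : forall i, measurable_fun `]a, b[ (phi i).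
Hypothesis hint : forall i, (@lebesgue_measure R).-integrable `]a, b[
                (fun x => ((phi i x) ^+ 2)%:E).

Let mD : measurable (`]a, b[ : set (measurableTypeR R)). Proof. exact: measurable_itv. Qed.

Lemma int_prod i j : (@lebesgue_measure R).-integrable `]a, b[
   (EFin \o (fun x => phi i x * phi j x)).
Proof.
have := integrableD mD (hint i) (hint j).
apply: le_integrable => //.
- apply/measurable_realfun.measurable_EFinP; apply: measurable_realfun.measurable_funM; [exact: hmeas|exact: hmeas]. 
- move=> x _ /=; rewrite lee_fin [X in _ <= X]ger0_norm ?addr_ge0 ?sqr_ge0 // normrM.
  have hx := normr_ge0 (phi i x); have hy := normr_ge0 (phi j x).
  rewrite -(real_normK (num_real (phi i x))) -(real_normK (num_real (phi j x))).
  nra.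
Qed.

Lemma int_sum (I : Type) (s : seq I) (F : I -> R -> R) :
  (forall i, (@lebesgue_measure R).-integrable `]a, b[ (EFin \o F i)) ->
  (@lebesgue_measure R).-integrable `]a, b[ (EFin \o (fun x => \sum_(i <- s) F i x)) /\
  Rintegral (@lebesgue_measure R) `]a, b[ (fun x => \sum_(i <- s) F i x) =
  \sum_(i <- s) Rintegral (@lebesgue_measure R) `]a, b[ (F i).
Proof.
move=> hF; elim: s => [|i s [IH1 IH2]].
  have -> : (fun x => \sum_(i <- [::]) F i x) = fun=> 0.
    by apply: funext => x; rewrite big_nil.
  split; last by rewrite big_nil Rintegral_cst // mul0r.
  exact: integrable0.
have -> : (fun x => \sum_(k <- i :: s) F k x) = fun x => F i x + \sum_(k <- s) F k x.
  by apply: funext => x; rewrite big_cons.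
split; first exact: (integrableD mD (hF i) IH1).
rewrite RintegralD // ?big_cons ?IH2 //.
Qed.


Lemma int_scale (f : R -> R) k : (@lebesgue_measure R).-integrable `]a, b[ (EFin \o f) ->
  (@lebesgue_measure R).-integrable `]a, b[ (EFin \o (fun x => k * f x)).
Proof.
move=> hf; have := integrableZl mD k hf.
by congr (_.-integrable _ _); apply: funext => x /=; rewrite EFinM.
Qed.

Definition Gip (i j : 'I_n) := ip a b (phi i) (phi j).

Lemma ipE u v : ip a b (vecf phi u) (vecf phi v) = bfG Gip u v.
Proof.
rewrite /ip /vecf /bfG /Gip.
have -> : (fun x => (\sum_i u i 0 * phi i x) * (\sum_j v j 0 * phi j x)) =
  fun x => \sum_i \sum_j (u i 0 * v j 0) * (phi i x * phi j x).
  apply: funext => x; rewrite mulr_suml; apply: eq_bigr => i _.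
  rewrite mulr_sumr; apply: eq_bigr => j _; ring.
have hij : forall i j, (@lebesgue_measure R).-integrable `]a, b[
   (EFin \o (fun x => (u i 0 * v j 0) * (phi i x * phi j x))).
  by move=> i j; apply: int_scale; exact: int_prod.
have hi : forall i, (@lebesgue_measure R).-integrable `]a, b[
   (EFin \o (fun x => \sum_j (u i 0 * v j 0) * (phi i x * phi j x))).
  by move=> i; exact: (int_sum _ (hij i)).1.
rewrite (int_sum _ hi).2.
apply: eq_bigr => i _.
rewrite (int_sum _ (hij i)).2; apply: eq_bigr => j _.
by rewrite RintegralZl //; exact: int_prod.
Qed.

End Form.

Local Close Scope classical_set_scope.

Section Cx.
Variables (R : realType) (n m : nat).
Definition re (w : 'M[R[i]]_(n, m)) := map_mx (@complex.Re R) w.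
Definition im (w : 'M[R[i]]_(n, m)) := map_mx (@complex.Im R) w.
Definition n2 (l : R[i]) : R := (complex.Re l ^+ 2 + complex.Im l ^+ 2)%R.

Lemma reD w1 w2 : re (w1 + w2) = re w1 + re w2.
Proof. by apply/matrixP => i j; rewrite !mxE; case: (w1 i j); case: (w2 i j). Qed.
Lemma imD w1 w2 : im (w1 + w2) = im w1 + im w2.
Proof. by apply/matrixP => i j; rewrite !mxE; case: (w1 i j); case: (w2 i j). Qed.
Lemma re0 : re 0 = 0.
Proof. by apply/matrixP => i j; rewrite !mxE. Qed.
Lemma im0 : im 0 = 0.
Proof. by apply/matrixP => i j; rewrite !mxE. Qed.
Lemma reZ l w : re (l *: w) = (complex.Re l *: re w - complex.Im l *: im w)%R.
Proof.
apply/matrixP => i j; rewrite !mxE; case: l => x y; case: (w i j) => u v /=; ring.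
Qed.
Lemma imZ l w : im (l *: w) = (complex.Re l *: im w + complex.Im l *: re w)%R.
Proof.
apply/matrixP => i j; rewrite !mxE; case: l => x y; case: (w i j) => u v /=; ring.
Qed.
End Cx.

Lemma n2M (R : realType) (x y : R[i]) : n2 (x * y) = (n2 x * n2 y)%R.
Proof. by case: x => a b; case: y => c d; rewrite /n2 /=; ring. Qed.
Lemma n2_ge0 (R : realType) (x : R[i]) : (0 <= n2 x)%R.
Proof. by rewrite /n2 addr_ge0 ?sqr_ge0. Qed.

Local Close Scope complex_scope.

Section Nrm.
Variables (R : realType) (n : nat) (G : 'I_n -> 'I_n -> R).
Hypothesis Gsym : forall i j, G i j = G j i.
Hypothesis bf_ge0 : forall u, 0 <= bfG G u u.
Local Notation bf := (bfG G).

Definition Q (w : 'cV[R[i]]_n) := q2 G (re w) (im w).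
Definition Nm (w : 'cV[R[i]]_n) := Num.sqrt (Q w).

Lemma Q_ge0 w : 0 <= Q w.
Proof. exact: q2_ge0. Qed.
Lemma Nm_ge0 w : 0 <= Nm w.
Proof. exact: sqrtr_ge0. Qed.

Lemma QZ l w : Q (l *: w) = n2 l * Q w.
Proof.
rewrite /Q reZ imZ /q2 /n2 !(bfDl, bfDr, bfNl, bfNr, bfZl, bfZr).
rewrite (bfC Gsym (im w) (re w)); ring.
Qed.

Lemma NmZ l w : Nm (l *: w) = Num.sqrt (n2 l) * Nm w.
Proof. by rewrite /Nm QZ sqrtrM // n2_ge0. Qed.

Lemma NmD w1 w2 : Nm (w1 + w2) <= Nm w1 + Nm w2.
Proof. rewrite /Nm /Q reD imD; exact: tri. Qed.

Lemma Nm0 : Nm 0 = 0.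
Proof. by rewrite /Nm /Q re0 im0 /q2 bf0l addr0 sqrtr0. Qed.

Lemma Nm_sum (I : Type) (s : seq I) (F : I -> 'cV[R[i]]_n) :
  Nm (\sum_(k <- s) F k) <= \sum_(k <- s) Nm (F k).
Proof.
elim: s => [|k s IH]; first by rewrite !big_nil Nm0.
rewrite !big_cons; apply: le_trans (NmD _ _) _; exact: lerD.
Qed.

Variable A : 'M[R]_n.
Hypothesis Asa : forall u v, bf (A *m u) v = bf u (A *m v).
Hypothesis Apos : forall u, 0 <= bf u (A *m u).
Hypothesis Gdef : forall u, bf u u = 0 -> u = 0.

Lemma reA (y : 'cV[R[i]]_n) : re (map_mx (real_complex R) A *m y) = A *m re y.
Proof.
apply/matrixP => i j; rewrite !mxE.
elim/big_rec2: _ => [|k x1 x2 _ <-]; first by [].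
by rewrite !mxE; case: (y k j) => u v; case: x2 => p q /=; ring.
Qed.
Lemma imA (y : 'cV[R[i]]_n) : im (map_mx (real_complex R) A *m y) = A *m im y.
Proof.
apply/matrixP => i j; rewrite !mxE.
elim/big_rec2: _ => [|k x1 x2 _ <-]; first by [].
by rewrite !mxE; case: (y k j) => u v; case: x2 => p q /=; ring.
Qed.

Definition kk (w : R[i]) := complex.Im w ^+ 2 + (if 0 <= complex.Re w then complex.Re w ^+ 2 else 0).

Lemma QM (w : R[i]) (s : R) (y : 'cV[R[i]]_n) : 0 <= s ->
  kk w * Q y <= Q ((w%:M + (s%:C)%C *: map_mx (real_complex R) A) *m y).
Proof.
move=> s0.
rewrite mulmxDl mul_scalar_mx -scalemxAl /Q reD imD !reZ !imZ reA imA /=.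
set u := re y; set v := im y.
rewrite !scale0r !subr0 !addr0.
set al := complex.Re w; set be := complex.Im w.
have e : q2 G (al *: u - be *: v + s *: (A *m u)) (al *: v + be *: u + s *: (A *m v)) =
   be ^+ 2 * q2 G u v + q2 G (al *: u + s *: (A *m u)) (al *: v + s *: (A *m v)).
  rewrite /q2 !(bfDl, bfDr, bfNl, bfNr, bfZl, bfZr).
  rewrite ?(bfC Gsym v u) ?(bfC Gsym (A *m u) u) ?(bfC Gsym (A *m v) v).
  rewrite ?(bfC Gsym (A *m v) u) ?(bfC Gsym v (A *m u)) ?(Asa u v); ring.
rewrite e /kk; case: ifP => hal.
  have e2 : q2 G (al *: u + s *: (A *m u)) (al *: v + s *: (A *m v)) =
    al ^+ 2 * q2 G u v + 2 * al * s * (bf u (A *m u) + bf v (A *m v))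
    + s ^+ 2 * q2 G (A *m u) (A *m v).
    rewrite /q2 !(bfDl, bfDr, bfNl, bfNr, bfZl, bfZr).
    rewrite ?(bfC Gsym (A *m u) u) ?(bfC Gsym (A *m v) v); ring.
  rewrite e2.
  have h1 := Apos u; have h2 := Apos v; have h3 := q2_ge0 bf_ge0 (A *m u) (A *m v).
  have h4 := q2_ge0 bf_ge0 u v.
  have h5 : 0 <= al * s * (bf u (A *m u) + bf v (A *m v)).
    by rewrite mulr_ge0 ?mulr_ge0 ?addr_ge0.
  have h6 : 0 <= s ^+ 2 * q2 G (A *m u) (A *m v) by rewrite mulr_ge0 ?sqr_ge0.
  lra.
rewrite addr0 lerDl; exact: q2_ge0.
Qed.

Lemma Q0 : Q 0 = 0.
Proof. by rewrite /Q re0 im0 /q2 bf0l addr0. Qed.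

Lemma Q_eq0 (y : 'cV[R[i]]_n) : Q y = 0 -> y = 0.
Proof.
rewrite /Q /q2 => h.
have h1 := bf_ge0 (re y); have h2 := bf_ge0 (im y).
have hr : re y = 0 by apply: Gdef; lra.
have hi : im y = 0 by apply: Gdef; lra.
apply/matrixP => i j; move/matrixP: hr => /(_ i j); move/matrixP: hi => /(_ i j).
by rewrite !mxE; case: (y i j) => p q /= -> ->.
Qed.

Lemma resolv (w : R[i]) (s : R) (x : 'cV[R[i]]_n) : 0 <= s -> 0 < kk w ->
  let M := w%:M + (s%:C)%C *: map_mx (real_complex R) A in
  M \in unitmx /\ Q (invmx M *m x) <= Q x / kk w.
Proof.
move=> s0 k0 M.
have hu : M \in unitmx.
  rewrite -unitmx_tr -row_free_unit; apply: inj_row_free => v hv.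
  have : M *m v^T = 0 by rewrite -[M]trmxK -trmx_mul hv trmx0.
  move=> hM.
  have := QM w v^T s0; rewrite -/M hM Q0 => hle.
  have hq := Q_ge0 v^T.
  have : Q v^T = 0.
    apply/eqP; rewrite eq_le hq andbT.
    by rewrite -(pmulr_rle0 _ k0).
  by move/Q_eq0 => h; rewrite -[v]trmxK h trmx0.
split => //.
rewrite ler_pdivlMr //.
have := QM w (invmx M *m x) s0; rewrite -/M mulKVmx // mulrC //.
Qed.
End Nrm.

Section Ang.
Variable R : realType.

Lemma cmod_ge0 (z : R[i]) : 0 <= cmod z.
Proof. exact: sqrtr_ge0. Qed.

Lemma ratio_in (z : R[i]) : -1 <= complex.Re z / cmod z <= 1.
Proof.
rewrite -ler_norml.
have [c0|cp] := eqVneq (cmod z) 0; first by rewrite c0 invr0 mulr0 normr0.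
have cpos : 0 < cmod z by rewrite lt_def cp cmod_ge0.
rewrite normrM (@ger0_norm _ (cmod z)^-1); last by rewrite invr_ge0 cmod_ge0.
rewrite ler_pdivrMr // mul1r /cmod -sqrtr_sqr; apply: ler_wsqrtr.
by rewrite lerDl sqr_ge0.
Qed.

Lemma carg_bd (z : R[i]) : - pi <= carg z <= pi.
Proof.
have h := ratio_in z.
have h1 := acos_ge0 h; have h2 := acos_lepi h.
rewrite /carg; case: ifP => _; apply/andP; split; lra.
Qed.

Lemma cos_neg_big (gam th : R) : 0 < gam < 1 -> - pi <= th <= pi ->
  cos (gam * th) < 0 -> sin (gam * pi) ^+ 2 <= sin (gam * th) ^+ 2.
Proof.
move=> /andP [g0 g1] /andP [t1 t2] hc.
have pi0 := pi_gt0 R.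
set x := `|gam * th|.
have hx : cos x = cos (gam * th).
  by rewrite /x; case: (ler0P (gam * th)) => _ //; rewrite cosN.
have sx : sin x ^+ 2 = sin (gam * th) ^+ 2.
  by rewrite /x; case: (ler0P (gam * th)) => _ //; rewrite sinN sqrrN.
have x0 : 0 <= x by exact: normr_ge0.
have xle : x <= gam * pi.
  rewrite /x normrM (ger0_norm (ltW g0)) ler_pM2l //.
  by rewrite ler_norml; apply/andP; split.
have [gh|gh] := lerP gam (1 / 2).
  have : 0 <= cos (gam * th).
    rewrite -hx; apply: cos_ge0_pihalf; apply/andP; split.
      have : 0 <= (pi : R) / 2 by lra.
      lra.
    apply: (le_trans xle); nra.
  lra.
have cpi : cos (gam * pi) < 0.
  have -> : gam * pi = (gam * pi - pi / 2) + pi / 2 by ring.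
  rewrite cosDpihalf oppr_lt0; apply: sin_gt0_pihalf; apply/andP; split; nra.
have spi : 0 <= sin (gam * pi).
  by apply: ltW; apply: sin_gt0_pi; apply/andP; split; nra.
set ps := gam * pi - x.
have ps0 : 0 <= ps by rewrite /ps subr_ge0.
have sps : 0 <= sin ps.
  have [->|psp] := eqVneq ps 0; first by rewrite sin0.
  apply: ltW; apply: sin_gt0_pi; apply/andP; split.
    by rewrite lt_def psp ps0.
  rewrite /ps; nra.
have ex : x = gam * pi - ps by rewrite /ps; ring.
have hcx : cos (gam * pi) <= cos x.
  rewrite ex cosB; have := cos_le1 ps.
  have := mulr_ge0 spi sps; nra.
rewrite -sx !sin2cos2 hx; rewrite hx in hcx; nra.
Qed.

Lemma kk_bound (gam : R) (z : R[i]) : 0 < gam < 1 ->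
  sin (gam * pi) ^+ 2 * powR (cmod z) gam ^+ 2 <= kk (cpow z gam).
Proof.
move=> hg.
rewrite /kk /cpow /=.
set P := powR (cmod z) gam; set ph := gam * carg z.
have P0 : 0 <= P by exact: powR_ge0.
have s1 : sin (gam * pi) ^+ 2 <= 1.
  by rewrite sin2cos2 lerBlDr lerDl sqr_ge0.
case: ifP => hc.
  rewrite !exprMn -mulrDr addrC cos2Dsin2 mulr1 mulrC.
  by rewrite ler_piMr // sqr_ge0.
rewrite addr0 exprMn mulrC ler_wpM2l ?sqr_ge0 //.
apply: cos_neg_big => //; first exact: carg_bd.
rewrite ltNge; apply/negP => hc'; move/negbT: hc; rewrite mulr_ge0 //.
Qed.
End Ang.

Section Sc2.
Variable R : realType.
Lemma zcRe (sig p : R) : complex.Re (zc sig p) = sig * (1 - p ^+ 2).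
Proof. rewrite /zc /= . ring. Qed.
Lemma zcIm (sig p : R) : complex.Im (zc sig p) = 2 * sig * p.
Proof. rewrite /zc /= . ring. Qed.
Lemma n2dzc (sig p : R) : n2 (dzc sig p) = 4 * sig ^+ 2 * (1 + p ^+ 2).
Proof. rewrite /n2 /dzc /= . ring. Qed.

Lemma cmod_zc (sig p : R) : 0 <= sig -> cmod (zc sig p) = sig * (1 + p ^+ 2).
Proof.
move=> s0; rewrite /cmod zcRe zcIm.
have -> : (sig * (1 - p ^+ 2)) ^+ 2 + (2 * sig * p) ^+ 2 =
  (sig * (1 + p ^+ 2)) ^+ 2 by ring.
by rewrite sqrtr_sqr ger0_norm // mulr_ge0 // addr_ge0 ?sqr_ge0.
Qed.

Lemma n2_cexp (z : R[i]) : n2 (cexp z) = expR (complex.Re z) ^+ 2.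
Proof.
rewrite /n2 /cexp /= !exprMn -mulrDr cos2Dsin2; ring.
Qed.

Lemma n2_cpow (z : R[i]) s : n2 (cpow z s) = powR (cmod z) s ^+ 2.
Proof.
rewrite /n2 /cpow /= !exprMn -mulrDr cos2Dsin2; ring.
Qed.

Lemma n2_real (r : R) : n2 (r%:C)%C = r ^+ 2.
Proof. rewrite /n2 /=; ring. Qed.

Lemma n2_divi (x : R[i]) : n2 (x / 'i)%C = n2 x.
Proof.
have hi : ('i : R[i])%C != 0.
  apply/eqP => h; have := congr1 (@complex.Im R) h => /=; apply/eqP; exact: oner_neq0.
have : n2 (x / 'i * 'i)%C = n2 x by rewrite mulfVK.
rewrite n2M (_ : n2 'i%C = 1) ?mulr1 //; rewrite /n2 /=; ring.
Qed.

Lemma key_real (sig beta gam p : R) : 0 < sig -> 1 / 2 <= beta ->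
  2 * sig * Num.sqrt (1 + p ^+ 2) * expR (sig * (1 - p ^+ 2))
    * powR (sig * (1 + p ^+ 2)) (gam - beta) / powR (sig * (1 + p ^+ 2)) gam
  <= 2 * sig * expR sig * (1 + sig^-1) * (powR sig beta)^-1 / (1 + p ^+ 2).
Proof.
move=> s0 hb.
set x := 1 + p ^+ 2.
have x1 : 1 <= x by rewrite /x lerDl sqr_ge0.
have x0 : 0 < x by apply: (lt_le_trans ltr01 x1).
have r0 : 0 < sig * x by rewrite mulr_gt0.
have hrg : 0 < powR (sig * x) gam by exact: powR_gt0.
rewrite powRB; last by apply/implyP => _; rewrite gt_eqF.
have e1 : powR (sig * x) gam / powR (sig * x) beta / powR (sig * x) gam
   = (powR sig beta)^-1 * (powR x beta)^-1.
  rewrite !powRM ?(ltW s0) ?(ltW x0) //; field.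
  rewrite !gt_eqF ?powR_gt0 //.
have sq : Num.sqrt x <= powR x beta.
  rewrite -powR12_sqrt ?(ltW x0) //; apply: ler_powR => //; lra.
have ex : expR (sig * (1 - p ^+ 2)) <= expR sig * (1 + sig^-1) / x.
  have -> : sig * (1 - p ^+ 2) = sig - sig * p ^+ 2 by ring.
  rewrite expRB ler_pdivrMr ?expR_gt0 // mulrAC ler_pdivlMr //.
  rewrite -mulrA; apply: ler_wpM2l; first exact: expR_ge0.
  apply: le_trans (_ : (1 + sig^-1) * (1 + sig * p ^+ 2) <= _).
    have -> : (1 + sig^-1) * (1 + sig * p ^+ 2) = 1 + sig * p ^+ 2 + sig^-1 + p ^+ 2.
      by field; rewrite gt_eqF.
    rewrite /x.
    have : 0 <= sig * p ^+ 2 by apply: mulr_ge0; [exact: ltW|exact: sqr_ge0].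
    have : 0 < sig^-1 by rewrite invr_gt0.
    lra.
  apply: ler_wpM2l; first by rewrite addr_ge0 // invr_ge0 ltW.
  have := expR_ge1Dx (sig * p ^+ 2); lra.
have pb : 0 < powR sig beta by exact: powR_gt0.
have pxb : 0 < powR x beta by exact: powR_gt0.
set E := expR (sig * (1 - p ^+ 2)).
have E0 : 0 <= E by exact: expR_ge0.
have eL : 2 * sig * Num.sqrt x * E * (powR (sig * x) gam / powR (sig * x) beta) /
   powR (sig * x) gam = (2 * sig) * ((Num.sqrt x / powR x beta) * E) / powR sig beta.
  rewrite !powRM ?(ltW s0) ?(ltW x0) //; field.
  by rewrite !gt_eqF ?powR_gt0.
have eR : 2 * sig * expR sig * (1 + sig^-1) * (powR sig beta)^-1 / x =
   (2 * sig) * (1 * (expR sig * (1 + sig^-1) / x)) / powR sig beta.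
  by field; rewrite !gt_eqF ?powR_gt0.
rewrite eL eR; apply: ler_wpM2r; first by rewrite invr_ge0 ltW.
apply: ler_wpM2l; first by rewrite mulr_ge0 // ltW.
apply: ler_pM => //; first by rewrite divr_ge0 ?sqrtr_ge0 ?ltW.
by rewrite ler_pdivrMr // mul1r.
Qed.
End Sc2.

Section Sum.
Variable R : realType.
Definition Hf (y : R) := 8 * y / (1 + `|y|).

Lemma frac_le (a b c d : R) : 0 < b -> 0 < d -> a * d <= c * b -> a / b <= c / d.
Proof.
move=> b0 d0 h; rewrite ler_pdivrMr // mulrAC ler_pdivlMr //.
Qed.

Lemma Hf_bd y : `|Hf y| <= 8.
Proof.
rewrite /Hf normrM normfV (ger0_norm (_ : 0 <= 1 + `|y|)) ?addr_ge0 ?normr_ge0 //.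
have h : 0 < 1 + `|y| by rewrite ltr_pwDl ?normr_ge0.
rewrite normrM (ger0_norm (_ : 0 <= 8 :> R)) //.
rewrite ler_pdivrMr //; have := normr_ge0 y; lra.
Qed.

Lemma step (x t : R) : 0 < t <= 1 -> t / (1 + x ^+ 2) <= Hf (x + t) - Hf x.
Proof.
move=> /andP [t0 t1]; rewrite /Hf.
have x2 := sqr_ge0 x.
have [x0|x0] := lerP 0 x.
  rewrite (ger0_norm x0) (@ger0_norm _ (x + t)); last lra.
  have -> : 8 * (x + t) / (1 + (x + t)) - 8 * x / (1 + x) =
    (8 * t) / ((1 + (x + t)) * (1 + x)).
    by field; apply/andP; split; rewrite gt_eqF //; lra.
  apply: frac_le; [lra | | ].
    by apply: mulr_gt0; lra.
  have hD : (1 + (x + t)) * (1 + x) <= 8 * (1 + x ^+ 2) by nra.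
  nra.
have [xt|xt] := lerP (x + t) 0.
  rewrite (ler0_norm xt) (ler0_norm (ltW x0)).
  have -> : 8 * (x + t) / (1 + - (x + t)) - 8 * x / (1 + - x) =
    (8 * t) / ((1 - (x + t)) * (1 - x)).
    by field; apply/andP; split; rewrite gt_eqF //; lra.
  apply: frac_le; [lra | | ].
    by apply: mulr_gt0; lra.
  have hD : (1 - (x + t)) * (1 - x) <= 8 * (1 + x ^+ 2) by nra.
  nra.
rewrite (ltr0_norm x0) (gtr0_norm xt).
have h1 : 4 * (x + t) <= 8 * (x + t) / (1 + (x + t)).
  by rewrite ler_pdivlMr; [nra | lra].
have h2 : 4 * (- x) <= - (8 * x / (1 + - x)).
  by rewrite -mulNr ler_pdivlMr; [nra | lra].
have h3 : t / (1 + x ^+ 2) <= t.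
  by rewrite ler_pdivrMr; [nra | lra].
lra.
Qed.

Lemma sum_bound (t : R) (N : nat) : 0 < t <= 1 ->
  \sum_(k < (2 * N).+1) t / (1 + ((k%:R - N%:R) * t) ^+ 2) <= 16.
Proof.
move=> ht.
set f := fun k : nat => Hf ((k%:R - N%:R) * t).
apply: le_trans (_ : \sum_(k < (2 * N).+1) (f k.+1 - f k) <= _).
  apply: ler_sum => k _; rewrite /f.
  have -> : ((k.+1)%:R - N%:R) * t = (k%:R - N%:R) * t + t.
    by rewrite -addn1 natrD; ring.
  exact: step.
rewrite -(big_mkord xpredT (fun k => f k.+1 - f k)) telescope_sumr //.
have := Hf_bd ((((2 * N).+1)%:R - N%:R) * t); have := Hf_bd ((0%:R - N%:R) * t).
rewrite /f !ler_norml; lra.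
Qed.
End Sum.

Section Term.
Variables (R : realType) (n : nat) (G : 'I_n -> 'I_n -> R).
Hypothesis Gsym : forall i j, G i j = G j i.
Hypothesis bf_ge0 : forall u, 0 <= bfG G u u.
Variable A : 'M[R]_n.
Hypothesis Asa : forall u v, bfG G (A *m u) v = bfG G u (A *m v).
Hypothesis Apos : forall u, 0 <= bfG G u (A *m u).
Hypothesis Gdef : forall u, bfG G u u = 0 -> u = 0.

Definition Kc (sig beta : R) := 2 * sig * expR sig * (1 + sig^-1) * (powR sig beta)^-1.

Lemma term_bd (gam Kg t sig beta p : R) (cC : 'cV[R[i]]_n) :
  0 < gam < 1 -> 0 < Kg -> 0 < t -> 0 < sig -> 1 / 2 <= beta ->
  Nm G ((dzc sig p * cexp (zc sig p) * cpow (zc sig p) (gam - beta)) *: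
    (invmx ((cpow (zc sig p) gam)%:M + ((Kg * powR t gam)%:C)%C *: map_mx (real_complex R) A)
      *m cC))
  <= Kc sig beta / sin (gam * pi) * Nm G cC / (1 + p ^+ 2).
Proof.
move=> hg hK ht hs hb.
set z := zc sig p.
set w := cpow z gam.
have s0 : 0 <= Kg * powR t gam by rewrite mulr_ge0 ?powR_ge0 // ltW.
have sg : 0 < sin (gam * pi).
  case/andP: hg => g0 g1; apply: sin_gt0_pi; have := pi_gt0 R => hp; apply/andP; split; nra.
have cz : cmod z = sig * (1 + p ^+ 2) by rewrite cmod_zc // ltW.
have x0 : 0 < 1 + p ^+ 2 by rewrite ltr_pwDl ?sqr_ge0.
have r0 : 0 < cmod z by rewrite cz mulr_gt0.
set P := powR (cmod z) gam.
have P0 : 0 < P by exact: powR_gt0.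
have kb := kk_bound z hg; rewrite -/w -/P in kb.
have k0 : 0 < kk w by apply: lt_le_trans kb; rewrite mulr_gt0 // exprn_gt0.
have [_ hr] := resolv Gsym bf_ge0 Asa Apos Gdef cC s0 k0.
set y := invmx _ *m cC in hr *.
have hy : Nm G y <= Nm G cC / (sin (gam * pi) * P).
  have e : Nm G cC / (sin (gam * pi) * P) = Num.sqrt (Q G cC / (sin (gam * pi) * P) ^+ 2).
    rewrite sqrtrM ?Q_ge0 // sqrtrV ?sqr_ge0 // sqrtr_sqr ger0_norm //.
    exact: ltW (mulr_gt0 sg P0).
  rewrite e /Nm; apply: ler_wsqrtr.
  apply: (le_trans hr); apply: ler_wpM2l; first exact: Q_ge0.
  rewrite lef_pV2 ?posrE ?exprn_gt0 ?mulr_gt0 //; by rewrite exprMn.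
rewrite (NmZ Gsym).
set a := 2 * sig * Num.sqrt (1 + p ^+ 2) * expR (complex.Re z) * powR (cmod z) (gam - beta).
have a0 : 0 <= a.
  by rewrite /a !mulr_ge0 ?sqrtr_ge0 ?expR_ge0 ?powR_ge0 // ltW.
have ea : Num.sqrt (n2 (dzc sig p * cexp z * cpow z (gam - beta))) = a.
  rewrite n2M (n2M (dzc sig p)) n2dzc n2_cexp n2_cpow -(ger0_norm a0) -sqrtr_sqr; congr Num.sqrt.
  rewrite /a !exprMn sqr_sqrtr ?ltW //; ring.
rewrite ea.
apply: le_trans (_ : a * (Nm G cC / (sin (gam * pi) * P)) <= _).
  exact: ler_wpM2l.
have := key_real gam p hs hb.
rewrite -cz -/P (_ : sig * (1 - p ^+ 2) = complex.Re z); last by rewrite zcRe.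
rewrite -/a /Kc => hk.
have N0 := Nm_ge0 G cC.
have -> : a * (Nm G cC / (sin (gam * pi) * P)) = (a / P) * (Nm G cC / sin (gam * pi)).
  by field; rewrite !gt_eqF //.
have -> : 2 * sig * expR sig * (1 + sig^-1) * (powR sig beta)^-1 / sin (gam * pi) * Nm G cC /
   (1 + p ^+ 2) = (2 * sig * expR sig * (1 + sig^-1) * (powR sig beta)^-1 / (1 + p ^+ 2)) *
   (Nm G cC / sin (gam * pi)).
  by field; rewrite !gt_eqF // powR_gt0.
apply: ler_wpM2r; [by rewrite divr_ge0 // ltW | exact: hk].
Qed.
End Term.

Unset Implicit Arguments.
Local Open Scope classical_set_scope.

Theorem lemma8 (R : realType) (a b : R) (n : nat) (phi : 'I_n -> R -> R)
    (A : 'M[R]_n) (gam Kg sig beta : R) :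
  a < b ->
  (* S_h = span(phi_i) is a finite-dimensional subspace of L^2(a,b) *)
  (forall i, measurable_fun `]a, b[ (phi i)) ->
  (forall i, (@lebesgue_measure R).-integrable `]a, b[
                (fun x => ((phi i x) ^+ 2)%:E)) ->
  (forall c : 'cV[R]_n, ip a b (vecf phi c) (vecf phi c) = 0 -> c = 0) ->
  (* L_h (matrix A) is self-adjoint and positive definite in L^2(a,b) *)
  (forall c d : 'cV[R]_n,
     ip a b (vecf phi (A *m c)) (vecf phi d) = ip a b (vecf phi c) (vecf phi (A *m d))) ->
  (forall c : 'cV[R]_n, c != 0 -> 0 < ip a b (vecf phi (A *m c)) (vecf phi c)) ->
  0 < gam < 1 -> 0 < Kg -> 0 < sig -> 1 / 2 <= beta ->
  exists C : R, forall (t tau1 : R) (N1 : nat) (c : 'cV[R]_n),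
    0 < t -> 0 < tau1 -> tau1 <= 1 -> (0 < N1)%N ->
    L2normC a b phi (PiN A gam Kg t sig tau1 beta N1 c)
      <= C * (powR t (beta - 1) / (2 * pi) * expR sig * powR sig (1 - beta)
              * L2norm a b phi c).
Proof.
move=> hab hmeas hint hdef hsa hpos hg hK hsig hbeta.
set G := Gip a b phi.
have ipE' : forall u v, ip a b (vecf phi u) (vecf phi v) = bfG G u v.
  by move=> u v; exact: ipE.
have Gsym : forall i j, G i j = G j i.
  by move=> i j; rewrite /G /Gip /ip; apply: eq_Rintegral => x _; exact: mulrC.
have bf_ge0 : forall u, 0 <= bfG G u u.
  by move=> u; rewrite -ipE'; apply: Rintegral_ge0 => x _; rewrite -expr2 sqr_ge0.
have Gdef : forall u, bfG G u u = 0 -> u = 0.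
  by move=> u h; apply: hdef; rewrite ipE'.
have Asa : forall u v, bfG G (A *m u) v = bfG G u (A *m v).
  by move=> u v; rewrite -!ipE'; exact: hsa.
have Apos : forall u, 0 <= bfG G u (A *m u).
  move=> u; case: (eqVneq u 0) => [->|hu]; first by rewrite mulmx0 bf0l.
  by rewrite -Asa -ipE'; exact: ltW (hpos u hu).
have sg0 : 0 < sin (gam * pi).
  case/andP: hg => g0 g1; apply: sin_gt0_pi; have := pi_gt0 R => hp; apply/andP; split; nra.
have K0 : 0 < Kc sig beta.
  rewrite /Kc !mulr_gt0 ?expR_gt0 ?invr_gt0 ?powR_gt0 ?addr_gt0 ?invr_gt0 //.
set K := Kc sig beta; set sg := sin (gam * pi).
have pi0 := pi_gt0 R.
exists (16 * (K / sg) / (expR sig * powR sig (1 - beta))).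
move=> t tau1 N1 c ht htau htau1 hN.
have hL2C : forall w, L2normC a b phi w = Nm G w.
  by move=> w; rewrite /L2normC !ipE'.
have hL2 : L2norm a b phi c = Nm G (map_mx (real_complex R) c).
  rewrite /L2norm ipE' /Nm /Q /q2.
  have -> : re (map_mx (real_complex R) c) = c by apply/matrixP => i j; rewrite !mxE.
  have -> : im (map_mx (real_complex R) c) = 0 by apply/matrixP => i j; rewrite !mxE.
  by rewrite bf0l addr0.
rewrite hL2C hL2 /PiN /=.
set cC := map_mx (real_complex R) c.
set T := powR t (beta - 1).
have T0 : 0 < T by exact: powR_gt0.
have N0 := Nm_ge0 G cC.
rewrite (NmZ Gsym) n2_divi n2_real sqrtr_sqr ger0_norm; last first.
  by rewrite divr_ge0 ?mulr_ge0 ?powR_ge0 // ltW.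
apply: le_trans (_ : T * tau1 / (2 * pi) *
   \sum_(k < (2 * N1).+1) (K / sg * Nm G cC / (1 + ((k%:R - N1%:R) * tau1) ^+ 2)) <= _).
  apply: ler_wpM2l; first by rewrite divr_ge0 ?mulr_ge0 // ltW.
  apply: le_trans (Nm_sum Gsym bf_ge0 _ _) _.
  apply: ler_sum => k _; exact: term_bd.
have -> : T * tau1 / (2 * pi) *
   \sum_(k < (2 * N1).+1) (K / sg * Nm G cC / (1 + ((k%:R - N1%:R) * tau1) ^+ 2)) =
   T / (2 * pi) * (K / sg * Nm G cC) *
   \sum_(k < (2 * N1).+1) (tau1 / (1 + ((k%:R - N1%:R) * tau1) ^+ 2)).
  rewrite !mulr_sumr; apply: eq_bigr => k _.
  have hx : 0 < 1 + ((k%:R - N1%:R) * tau1) ^+ 2 by rewrite ltr_pwDl ?sqr_ge0.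
  by move: pi0; generalize (pi : R) => q q0; field; rewrite !gt_eqF // mulr_gt0.
have -> : 16 * (K / sg) / (expR sig * powR sig (1 - beta)) *
   (T / (2 * pi) * expR sig * powR sig (1 - beta) * Nm G cC) =
   T / (2 * pi) * (K / sg * Nm G cC) * 16.
  by move: pi0; generalize (pi : R) => q q0; field; rewrite !gt_eqF // ?powR_gt0 ?expR_gt0.
apply: ler_wpM2l; last by apply: sum_bound; rewrite htau htau1.
have h1 : 0 <= T / (2 * pi) by apply: divr_ge0; [exact: ltW | apply: mulr_ge0 => //; exact: ltW].
have h2 : 0 <= K / sg by apply: divr_ge0; exact: ltW.
exact: mulr_ge0 h1 (mulr_ge0 h2 N0).
Qed.
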